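(* Let $p$ be a prime, $q$ a power of $p$, $F$ a field of characteristic $p$ containing $\mathbb{F}_q$, and $s>1$ an integer such that $\mathbb{F}_{q^s}$ is not contained in $F$. Let $L(x)=a_0x+a_1x^{q^s}+\cdots+a_mx^{q^{ms}}\in F[x]$ with $m\geq1$, $a_m\neq0$, and with no repeated roots in its splitting field $E$ over $F$; put $n=ms$ and let $v_1,\dots,v_n$ be an ordered $\mathbb{F}_q$-basis of the space of roots of $L$. Then the map $\epsilon_s:H_{n,s}(\mathbb{F}_q)\to E$, $\epsilon_s(P)=P(v_1,\dots,v_n)$, is not injective.
   Context: $H_{n,s}(\mathbb{F}_q)$ is the space of homogeneous polynomials of degree $s$ in $\mathbb{F}_q[x_1,\dots,x_n]$ together with $0$. Such an $L$ is called a $q^s$-polynomial; its roots form an $\mathbb{F}_q$-space of dimension $ms$. *)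

(* Defs.v *)
From HB Require Import structures.
From mathcomp Require Import all_boot all_order all_algebra all_field.
From mathcomp Require Import mpoly.
Set Implicit Arguments. Unset Strict Implicit. Unset Printing Implicit Defensive.
Import GRing.Theory.
Local Open Scope ring_scope.

Definition contains_finite_field (F : fieldType) (k : nat) : Prop :=
  exists (K : finFieldType) (f : {rmorphism K -> F}), #|K| = k.

Definition qs_poly (F : fieldType) (q s m : nat) (a : nat -> F) : {poly F} :=
  \sum_(i < m.+1) a i *: 'X^(q ^ (i * s)).

Definition is_Fq_basis_of_roots (Fq : finFieldType) (E : fieldType)
  (emb : Fq -> E) (Lpoly : {poly E}) (N : nat) (v : 'I_N -> E) : Prop :=
  [/\ forall i, root Lpoly (v i),
      forall c : 'I_N -> Fq, \sum_(i < N) emb (c i) * v i = 0 -> forall i, c i = 0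
    & forall x, root Lpoly x -> exists c : 'I_N -> Fq, x = \sum_(i < N) emb (c i) * v i].

Definition eps_eval (Fq : finFieldType) (E : fieldType) (emb : Fq -> E)
  (N : nat) (v : 'I_N -> E) (P : {mpoly Fq[N]}) : E :=
  mmap emb v P.

(* Main.v *)
Require Import Defs.
From HB Require Import structures.
From mathcomp Require Import all_boot all_order all_algebra all_field.
From mathcomp Require Import mpoly.
Import GRing.Theory.
Local Open Scope ring_scope.

Lemma frobB (R : comNzRingType) (Q : nat) (x y : R) :
  (GRing.pchar R).-nat Q -> (x - y) ^+ Q = x ^+ Q - y ^+ Q.
Proof.
move=> hQ; have := exprDn_pchar (x - y) y hQ.
by rewrite subrK => ->; rewrite addrK.
Qed.

Lemma frob_div (E : fieldType) (p e : nat) : prime p -> p \in [pchar E] ->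
  forall i, ('X^(p ^ e) - 'X : {poly E}) %| 'X^((p ^ e) ^ i) - 'X.
Proof.
move=> pp pc i; set Q := (p ^ e)%N.
have hQ : (GRing.pchar {poly E}).-nat Q.
  rewrite (eq_pnat _ (pcharf_eq (p := p) _)); last by rewrite pchar_poly.
  by rewrite pnatX pnat_id.
have Q0 : (0 < Q)%N by rewrite expn_gt0 prime_gt0.
elim: i => [|i IH]; first by rewrite expn0 subrr dvdp0.
have -> : ('X^(Q ^ i.+1) - 'X : {poly E}) = ('X^(Q ^ i) - 'X) ^+ Q + ('X^Q - 'X).
  by rewrite frobB // expnSr exprM addrA subrK.
by apply: dvdp_add => //; apply: dvdp_exp.
Qed.

Lemma exists_alpha (E : fieldType) (Fq : finFieldType) (emb : Fq -> E)
  (p e s m : nat) (b : nat -> E) (c : E) (rs : seq E) (w : E) :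
  prime p -> p \in [pchar E] -> #|Fq| = (p ^ e)%N -> (0 < e)%N -> (1 < s)%N ->
  \sum_(i < m.+1) b i *: 'X^((p ^ e) ^ (i * s)) = c *: \prod_(r <- rs) ('X - r%:P) ->
  c != 0 -> uniq rs -> w != 0 ->
  (\sum_(i < m.+1) b i *: 'X^((p ^ e) ^ (i * s))).[w] = 0 ->
  exists2 al : E, al ^+ ((p ^ e) ^ s) = al & forall z, emb z != al.
Proof.
move=> pp pc cardF e0 s1 Lfac c0 urs w0 Lw.
set q := (p ^ e)%N in cardF Lfac Lw *.
set Q := (q ^ s)%N.
have q1 : (1 < q)%N by rewrite /q -{1}(expn0 p) ltn_exp2l ?prime_gt1.
have qQ : (q < Q)%N by rewrite /Q -{1}(expn1 q) ltn_exp2l.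
have hexp i : (q ^ (i * s) = Q ^ i)%N by rewrite mulnC expnM.
set L := \sum_(i < m.+1) _ in Lfac Lw.
set M := L \Po (w *: 'X).
have M1 : M = \sum_(i < m.+1) (b i * w ^+ (Q ^ i)) *: 'X^(Q ^ i).
  rewrite /M /L raddf_sum; apply: eq_bigr => i _ /=.
  by rewrite comp_polyZ comp_Xn_poly exprZn scalerA hexp.
have M2 : M = (c * \prod_(r <- rs) w) *: \prod_(r <- rs) ('X - (r / w)%:P).
  rewrite /M Lfac comp_polyZ.
  have -> : forall ss : seq E, (\prod_(r <- ss) ('X - r%:P)) \Po (w *: 'X)
      = \prod_(r <- ss) (w%:P * ('X - (r / w)%:P)).
    elim => [|r ss IH]; first by rewrite !big_nil comp_polyC.
    rewrite !big_cons comp_polyM IH; congr (_ * _).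
    rewrite comp_polyB comp_polyX comp_polyC mulrBr -polyCM.
    by rewrite mul_polyC mulrC divfK.
  by rewrite big_split /= -rmorph_prod mul_polyC scalerA.
set D : {poly E} := 'X^Q - 'X.
have DM : D %| M.
  have -> : M = \sum_(i < m.+1) (b i * w ^+ (Q ^ i)) *: ('X^(Q ^ i) - 'X).
    have Lw' : \sum_(i < m.+1) (b i * w ^+ (Q ^ i)) = 0.
      transitivity L.[w]; last exact: Lw.
      rewrite /L horner_sum; apply: eq_bigr => i _.
      by rewrite hornerZ hornerXn hexp.
    rewrite M1; under [RHS]eq_bigr => i _ do rewrite scalerBr.
    by rewrite sumrB -scaler_suml Lw' scale0r subr0.
  apply: (big_ind (fun P => D %| P)); first exact: dvdp0.
    by move=> x y; apply: dvdp_add.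
  move=> i _; rewrite -mul_polyC; apply: dvdp_mull.
  by rewrite /D /Q /q -expnM frob_div // expnM.
have cw0 : c * \prod_(r <- rs) w != 0.
  by rewrite mulf_neq0 // prodf_seq_neq0; apply/allP.
move: DM; rewrite M2 dvdpZr //.
move=> /(dvdp_prod_XsubC) [msk Deq].
set ts := map (fun r => r / w) (mask msk rs).
have Deq' : D %= \prod_(t <- ts) ('X - t%:P) by rewrite big_map.
have uts : uniq ts.
  rewrite map_inj_uniq ?mask_uniq //; exact: (mulIf (invr_neq0 w0)).
have szD : size D = Q.+1.
  rewrite /D size_addl size_polyXn // size_opp size_polyX ltnS.
  exact: ltn_trans q1 qQ.
have szts : size ts = Q.
  by apply/eq_add_S; rewrite -szD (eqp_size Deq') size_prod_XsubC.
have rootts t : t \in ts -> t ^+ Q = t.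
  move=> tin; have : root D t by rewrite (eqp_root Deq' t) root_prod_XsubC.
  by rewrite /root /D !hornerE subr_eq0 => /eqP.
case: (boolP (all (fun t => t \in codom emb) ts)) => [/allP hall | ].
  have := uniq_leq_size uts hall.
  by rewrite size_codom cardF szts leqNgt qQ.
case/allPn => t tin tnot; exists t; first exact: rootts.
move=> z; apply/eqP => ezt; move: tnot; rewrite -ezt codom_f //.
Qed.

Theorem theorem7p6
  (p q s m : nat) (F : fieldType) (Fq : finFieldType) (iota : {rmorphism Fq -> F})
  (a : nat -> F) (E : fieldExtType F) (v : 'I_(m * s) -> E) :
  prime p -> p \in [pchar F] -> (exists k, q = p ^ k.+1)%N ->
  #|Fq| = q ->
  (1 < s)%N ->
  ~ contains_finite_field F (q ^ s) ->
  (1 <= m)%N -> a m != 0 ->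
  splittingFieldFor 1%VS (map_poly (in_alg E) (qs_poly q s m a)) fullv ->
  (exists2 rs : seq E,
      map_poly (in_alg E) (qs_poly q s m a)
        = (in_alg E (lead_coef (qs_poly q s m a))) *: \prod_(r <- rs) ('X - r%:P)
    & uniq rs) ->
  is_Fq_basis_of_roots (fun c => in_alg E (iota c))
    (map_poly (in_alg E) (qs_poly q s m a)) v ->
  ~ injective (fun P : {P : {mpoly Fq[m * s]} | P \is s.-homog} =>
                 eps_eval (fun c => in_alg E (iota c)) v (val P)).
Proof.
move=> pp pc [k qk] cardF s1 _ m1 am _ [rs Lfac urs] [vroot vind vspan] inj.
pose emb : {rmorphism Fq -> E} := (in_alg E \o iota)%function.
have pE : p \in [pchar E] by rewrite (fmorph_pchar (in_alg E)).
have q1 : (1 < q)%N by rewrite qk -{1}(expn0 p) ltn_exp2l ?prime_gt1.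
have s0 : (0 < s)%N by apply: ltnW.
have n1 : (1 < m * s)%N by rewrite (leq_trans s1) // leq_pmull.
set Lp := qs_poly q s m a in Lfac vroot vspan inj.
set LE := map_poly (in_alg E) Lp in Lfac vroot vspan inj.
have LEE : LE = \sum_(i < m.+1) (a i)%:A *: 'X^(q ^ (i * s)).
  rewrite /LE /Lp /qs_poly raddf_sum; apply: eq_bigr => i _ /=.
  by rewrite map_polyZ map_polyXn.
have hornL x : LE.[x] = \sum_(i < m.+1) (a i)%:A * x ^+ (q ^ (i * s)).
  by rewrite LEE horner_sum; apply: eq_bigr => i _; rewrite hornerZ hornerXn.
have Lp0 : Lp != 0.
  apply/eqP => /(congr1 (fun P : {poly F} => P`_(q ^ (m * s)))).
  rewrite coef0 /Lp /qs_poly coef_sum (bigD1 ord_max) //= big1 ?addr0.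
    by rewrite coefZ coefXn eqxx mulr1; apply/eqP.
  move=> i /eqP ne; rewrite coefZ coefXn eqn_exp2l // eqn_mul2r eqn0Ngt s0 /=.
  rewrite (_ : (m == i) = false) ?mulr0 //.
  by apply/eqP => h; apply: ne; apply: val_inj.
have lc0 : in_alg E (lead_coef Lp) != 0 by rewrite fmorph_eq0 lead_coef_eq0.
pose a0 : 'I_(m * s) := Ordinal (ltnW n1).
pose b1 : 'I_(m * s) := Ordinal n1.
have ab : a0 != b1 by [].
have vne i : v i != 0.
  apply/eqP => vi0.
  suff : ((i == i)%:R : Fq) = 0 by rewrite eqxx => /eqP; rewrite oner_eq0.
  apply: (vind (fun j => (j == i)%:R)).
  rewrite (bigD1 i) //= big1 ?addr0; first by rewrite eqxx /= mulr1n rmorph1 scale1r mul1r vi0.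
  by move=> j /negbTE -> /=; rewrite mulr0n rmorph0 scale0r mul0r.
set w := v a0.
have [al alQ alnot] : exists2 al : E, al ^+ ((p ^ k.+1) ^ s) = al & forall z, emb z != al.
  apply: (@exists_alpha E Fq emb p k.+1 s m (fun i => (a i)%:A) (in_alg E (lead_coef Lp)) rs w) => //; rewrite -?qk -?LEE //.
  exact: vne.
  exact/eqP/vroot.
rewrite -qk in alQ.
have alpow i : al ^+ (q ^ (i * s)) = al.
  rewrite mulnC expnM; elim: i => [|i IH]; first by rewrite expr1.
  by rewrite expnSr exprM IH alQ.
have rootal x : root LE x -> root LE (al * x).
  rewrite /root !hornL => /eqP h; apply/eqP.
  under eq_bigr => i _ do rewrite exprMn alpow mulrCA.
  by rewrite -mulr_sumr h mulr0.
have [c hc] := vspan _ (rootal _ (vroot a0)).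
have [d hd] := vspan _ (rootal _ (vroot b1)).
have [j ja cj] : exists2 j, j != a0 & c j != 0.
  case: (pickP (fun j => (j != a0) && (c j != 0))) => [j /andP[ja cj] | none].
    by exists j.
  exfalso; move: hc; rewrite (bigD1 a0) //= big1 ?addr0; last first.
    move=> j ja; have := none j; rewrite /= ja /= => /negbFE/eqP ->.
    by rewrite rmorph0 scale0r mul0r.
  move/eqP; rewrite -subr_eq0 -mulrBl mulf_eq0 (negbTE (vne a0)) orbF subr_eq0.
  by move/eqP => h; move: (alnot (c a0)); rewrite h eqxx.
have s21 : (s - 1 = (s - 2).+1)%N by rewrite -subSn.
pose P1 : {mpoly Fq[m * s]} :=
  \sum_(i < m * s) d i *: 'X_[U_(a0) *+ (s - 1) + U_(i)].
pose P2 : {mpoly Fq[m * s]} :=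
  \sum_(i < m * s) c i *: 'X_[U_(a0) *+ (s - 2) + U_(b1) + U_(i)].
have h1 : P1 \is s.-homog.
  apply: rpred_sum => i _; apply: rpredZ.
  rewrite dhomogX; change (mdeg (U_(a0) *+ (s - 1) + U_(i))%MM == s).
  by rewrite mdegD mdegMn !mdeg1 mul1n subnK.
have h2 : P2 \is s.-homog.
  apply: rpred_sum => i _; apply: rpredZ.
  rewrite dhomogX; change (mdeg (U_(a0) *+ (s - 2) + U_(b1) + U_(i))%MM == s).
  by rewrite !mdegD mdegMn !mdeg1 mul1n -addnA (_ : 1 + 1 = 2)%N // subnK.
have ev P : eps_eval (fun c => in_alg E (iota c)) v P = mmap emb v P by [].
have mX (mu : 'X_{1..m * s}) : mmap emb v 'X_[mu] = mmap1 v mu := mmapX _ _ _.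
have mXU i : mmap emb v 'X_[U_(i)] = v i by rewrite mX mmap1U.
have mXM (mu nu : 'X_{1..m * s}) :
  mmap emb v 'X_[mu + nu] = mmap emb v 'X_[mu] * mmap emb v 'X_[nu].
  by rewrite mpolyXD rmorphM.
have mXn (mu : 'X_{1..m * s}) t : mmap emb v 'X_[mu *+ t] = (mmap emb v 'X_[mu]) ^+ t.
  by rewrite -mpolyXn rmorphXn.
have E1 : mmap emb v P1 = w ^+ (s - 1) * (al * v b1).
  rewrite raddf_sum.
  under eq_bigr => i _ do rewrite /= mmapZ !mXM mXn !mXU mulrCA.
  by rewrite -mulr_sumr hd.
have E2 : mmap emb v P2 = (w ^+ (s - 2) * v b1) * (al * w).
  rewrite raddf_sum.
  under eq_bigr => i _ do rewrite /= mmapZ !mXM mXn !mXU mulrCA.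
  by rewrite -mulr_sumr hc.
have EE : mmap emb v P1 = mmap emb v P2.
  rewrite E1 E2 s21 exprSr -!mulrA; congr (_ * _).
  by rewrite [RHS]mulrC [al * w]mulrC -mulrA.
have := inj (exist _ P1 h1) (exist _ P2 h2); rewrite /= !ev EE => /(_ erefl).
move/(congr1 val) => /= /(congr1 (mcoeff (U_(a0) *+ (s - 2) + U_(b1) + U_(j))%MM)).
rewrite !raddf_sum /= big1; last first.
  move=> i _; rewrite mcoeffZ mcoeffX.
  rewrite (_ : (_ == _) = false) ?mulr0 //.
  apply/eqP => /(congr1 (fun mm : 'X_{1..m * s} => mm a0)).
  have ba : (b1 == a0) = false by rewrite eq_sym; apply/negbTE.
  have ja' : (j == a0) = false by apply/negbTE.
  rewrite !mnmDE !mulmnE !mnm1E eqxx ba ja'.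
  rewrite /= !mul1n !addn0 s21 addSn => /eqP.
  by rewrite -addnS -{2}(addn0 (s - 2)%N) eqn_add2l.
rewrite (bigD1 j) //= big1; last first.
  move=> i ij; rewrite mcoeffZ mcoeffX eqm_add2l.
  rewrite (_ : (_ == _) = false) ?mulr0 //.
  apply/eqP => /(congr1 (fun mm : 'X_{1..m * s} => mm i)).
  have ji : (j == i) = false by rewrite eq_sym; apply/negbTE.
  by rewrite !mnm1E eqxx ji.
rewrite mcoeffZ mcoeffX eqxx mulr1 addr0 => /esym/eqP.
by rewrite (negbTE cj).
Qed.
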